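(* Let $\mathfrak{g}$ be a real solvable Lie algebra of dimension $2n$ with basis $\{X_1,\dots,X_{4m},\dots,X_{2n}\}$ such that $b_1(\mathfrak{g})=4m$, and let $E$ be a paracomplex structure on $\mathfrak{g}$ with eigenspace decomposition $\mathfrak{g}=\mathfrak{g}_+\oplus\mathfrak{g}_-$. Suppose 1. $X_i\notin D^1\mathfrak{g}=[\mathfrak{g},\mathfrak{g}]$ for $1\le i\le 4m$; 2. $X_i\in\mathfrak{g}_+$ for $1\le i\le 2m$ and $X_i\in\mathfrak{g}_-$ for $2m+1\le i\le 4m$; 3. $b_1(\mathfrak{g}_+)=b_1(\mathfrak{g}_-)=2m$. Then $\mathfrak{g}_+\underline{\times}\mathfrak{g}_-$ admits a paracomplex structure.
   Context: All Lie algebras are finite-dimensional over $\mathbb{R}$; $b_1(\mathfrak{h})=\dim\mathfrak{h}/[\mathfrak{h},\mathfrak{h}]$. A product structure on a Lie algebra $\mathfrak{g}$ is a linear map $E:\mathfrak{g}\to\mathfrak{g}$ with $E^2=\mathrm{id}$, $E\ne\pm\mathrm{id}$, satisfying $E[X,Y]=[E(X),Y]+[X,E(Y)]-E[E(X),E(Y)]$ for all $X,Y$; then the eigenspaces $\mathfrak{g}_+$ (eigenvalue $1$) and $\mathfrak{g}_-$ (eigenvalue $-1$) are subalgebras and $\mathfrak{g}=\mathfrak{g}_+\oplus\mathfrak{g}_-$. A paracomplex structure is a product structure with $\dim\mathfrak{g}_+=\dim\mathfrak{g}_-$. Product by generators: for Lie algebras $\mathfrak{h}_1,\mathfrak{h}_2$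 with $m_i=b_1(\mathfrak{h}_i)$, choose linear forms $\omega_1,\dots,\omega_{m_1}$ on $\mathfrak{h}_1$ vanishing on $[\mathfrak{h}_1,\mathfrak{h}_1]$ and inducing a basis of $(\mathfrak{h}_1/[\mathfrak{h}_1,\mathfrak{h}_1])^*$, similarly $\omega'_1,\dots,\omega'_{m_2}$ for $\mathfrak{h}_2$; $\mathfrak{h}_1\underline{\times}\mathfrak{h}_2$ is the Lie algebra on $\mathfrak{h}_1\oplus\mathfrak{h}_2\oplus\mathbb{R}^{m_1m_2}$ (basis $Z_{ij}$ of the last summand) whose bracket restricts to the given brackets on $\mathfrak{h}_1$ and $\mathfrak{h}_2$, with $Z_{ij}$ central and $[x,y]=\sum_{i,j}\omega_i(x)\omega'_j(y)Z_{ij}$ for $x\in\mathfrak{h}_1$, $y\in\mathfrak{h}_2$. *)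

(* Defs.v *)
(* Finite-dimensional real Lie algebras are represented in
   coordinates: a Lie algebra of dimension d is a bracket on 'rV[R]_d.
   Linear maps act on row vectors on the right: v |-> v *m E. *)
From HB Require Import structures.
From mathcomp Require Import all_boot all_order all_algebra.
From mathcomp Require Import reals.
Set Implicit Arguments. Unset Strict Implicit. Unset Printing Implicit Defensive.
Import Order.TTheory GRing.Theory Num.Theory.
Local Open Scope ring_scope.

Section Lie.
Variable R : realType.

Definition bracket (d : nat) := 'rV[R]_d -> 'rV[R]_d -> 'rV[R]_d.

Definition is_lie d (br : bracket d) : Prop :=
  [/\ (forall (a : R) u v w, br (a *: u + v) w = a *: br u w + br v w),
      (forall (a : R) u v w, br w (a *: u + v) = a *: br w u + br w v),
      (forall u, br u u = 0) &
      (forall u v w, br u (br v w) + br v (br w u) + br w (br u v) = 0)].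

(* [V,V] for the subspace V spanned by the rows of V: the span of the
   brackets of the spanning vectors (= span of all brackets of V, by
   bilinearity). *)
Definition derived d (br : bracket d) k (V : 'M[R]_(k, d)) : 'M[R]_d :=
  (\sum_(i < k) \sum_(j < k) <<br (row i V) (row j V)>>)%MS.

Fixpoint derived_series d (br : bracket d) (k : nat) : 'M[R]_d :=
  match k with
  | 0 => 1%:M
  | k'.+1 => derived br (derived_series br k')
  end.

Definition solvable_lie d (br : bracket d) : Prop :=
  exists k, derived_series br k = 0.

Definition sub_b1 d (br : bracket d) k (V : 'M[R]_(k, d)) : nat :=
  (\rank V - \rank (derived br V))%N.

Definition lie_b1 d (br : bracket d) : nat := sub_b1 br (1%:M : 'M[R]_d).

Definition product_structure d (br : bracket d) (E : 'M[R]_d) : Prop :=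
  [/\ E *m E = 1%:M, E <> 1%:M, E <> - 1%:M &
      forall x y, br x y *m E =
        br (x *m E) y + br x (y *m E) - br (x *m E) (y *m E) *m E].

Definition paracomplex d (br : bracket d) (E : 'M[R]_d) : Prop :=
  product_structure br E /\
  \rank (eigenspace E 1) = \rank (eigenspace E (-1)).

(* The Lie algebra structure induced on a subalgebra, in the coordinates
   given by a basis B (the rows of B, assumed row_free and spanning a
   subalgebra). *)
Definition transport d p (br : bracket d) (B : 'M[R]_(p, d)) : bracket p :=
  fun u v => br (u *m B) (v *m B) *m pinvmx B.

(* W : 'M_(p,k): its k columns are linear forms omega_1..omega_k on h
   (omega_i(x) = (x *m W) 0 i); they vanish on [h,h] and induce a basis of
   (h/[h,h])^*, with k = b_1(h). *)
Definition gen_forms p (b : bracket p) k (W : 'M[R]_(p, k)) : Prop :=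
  [/\ k = lie_b1 b, (forall u v, b u v *m W = 0) & \rank W = k].

(* product by generators h1 x_ h2 on h1 (+) h2 (+) R^{k1 k2};
   vector x = row_mx (row_mx a b) z, with a in h1, b in h2, z in R^{k1 k2}
   (Z_ij corresponds to coordinate mxvec_index i j). *)
Definition gen_prod p q k1 k2 (b1 : bracket p) (b2 : bracket q)
  (W1 : 'M[R]_(p, k1)) (W2 : 'M[R]_(q, k2)) : bracket (p + q + k1 * k2) :=
  fun x y =>
    let a := lsubmx (lsubmx x) in let b := rsubmx (lsubmx x) in
    let a' := lsubmx (lsubmx y) in let b' := rsubmx (lsubmx y) in
    row_mx (row_mx (b1 a a') (b2 b b'))
      (mxvec (((a *m W1)^T *m (b' *m W2)) - ((a' *m W1)^T *m (b *m W2)))).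

End Lie.

(* Main.v *)
Require Import Defs.
From HB Require Import structures.
From mathcomp Require Import all_boot all_order all_algebra.
From mathcomp Require Import reals ring zify.
Import Order.TTheory GRing.Theory Num.Theory.
Local Open Scope ring_scope.
Set Implicit Arguments. Unset Strict Implicit. Unset Printing Implicit Defensive.

Section H.
Variable R : realType.
Variable d : nat.
Variable br : bracket R d.
Hypothesis L : is_lie br.

Lemma br0l w : br 0 w = 0.
Proof.
case: L => H _ _ _; have h := H 1 0 0 w.
rewrite !scale1r addr0 in h; apply: (addrI (br 0 w)); by rewrite addr0 -h.
Qed.
Lemma br0r w : br w 0 = 0.
Proof.
case: L => _ H _ _; have h := H 1 0 0 w.
rewrite !scale1r addr0 in h; apply: (addrI (br w 0)); by rewrite addr0 -h.
Qed.
Lemma brDl u v w : br (u + v) w = br u w + br v w.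
Proof. case: L => H _ _ _. have := H 1 u v w. rewrite !scale1r. by []. Qed.
Lemma brDr u v w : br w (u + v) = br w u + br w v.
Proof. case: L => _ H _ _. have := H 1 u v w. rewrite !scale1r. by []. Qed.
Lemma brZl a u w : br (a *: u) w = a *: br u w.
Proof. case: L => H _ _ _. have := H a u 0 w. by rewrite !addr0 br0l addr0. Qed.
Lemma brZr a u w : br w (a *: u) = a *: br w u.
Proof. case: L => _ H _ _. have := H a u 0 w. by rewrite !addr0 br0r addr0. Qed.
Lemma brNl u w : br (- u) w = - br u w.
Proof. by rewrite -scaleN1r brZl scaleN1r. Qed.
Lemma brNr u w : br w (- u) = - br w u.
Proof. by rewrite -scaleN1r brZr scaleN1r. Qed.
Lemma br_suml I (r : seq I) (P : pred I) F w :
  br (\sum_(i <- r | P i) F i) w = \sum_(i <- r | P i) br (F i) w.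
Proof.
apply: (big_rec2 (fun y1 y2 => br y1 w = y2)); first exact: br0l.
by move=> i y1 y2 _ <-; rewrite brDl.
Qed.
Lemma br_sumr I (r : seq I) (P : pred I) F w :
  br w (\sum_(i <- r | P i) F i) = \sum_(i <- r | P i) br w (F i).
Proof.
apply: (big_rec2 (fun y1 y2 => br w y1 = y2)); first exact: br0r.
by move=> i y1 y2 _ <-; rewrite brDr.
Qed.

Lemma br_sub_derived k (B : 'M[R]_(k, d)) u v :
  (u <= B)%MS -> (v <= B)%MS -> (br u v <= derived br B)%MS.
Proof.
move=> /mulmxKpV <- /mulmxKpV <-.
rewrite !mulmx_sum_row br_suml; apply: summx_sub => i _.
rewrite br_sumr; apply: summx_sub => j _.
rewrite brZl brZr; do 2 apply: scalemx_sub.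
rewrite /derived; apply: (sumsmx_sup i) => //; apply: (sumsmx_sup j) => //.
by rewrite genmxE.
Qed.

Lemma derived_mono k l (A : 'M[R]_(k, d)) (B : 'M[R]_(l, d)) :
  (A <= B)%MS -> (derived br A <= derived br B)%MS.
Proof.
move=> sAB; apply/sumsmx_subP => i _; apply/sumsmx_subP => j _.
by rewrite genmxE; apply: br_sub_derived; apply: submx_trans sAB; apply: row_sub.
Qed.

Lemma b1_transport p (Bp : 'M[R]_(p, d)) k (V : 'M[R]_(k, d)) :
  (forall u v, (u <= V)%MS -> (v <= V)%MS -> (br u v <= V)%MS) ->
  row_free Bp -> (Bp == V)%MS ->
  lie_b1 (transport br Bp) = sub_b1 br V.
Proof.
move=> cl fB eBV.
rewrite /lie_b1 /sub_b1 mxrank1 -(eqmx_rank eBV) (eqP fB).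
have -> : \rank (derived br V) = \rank (derived br Bp).
  apply: eqmx_rank; apply/andP; split; apply: derived_mono.
    by case/andP: eBV.
  by case/andP: eBV.
congr (_ - _)%N.
rewrite -(mxrankMfree _ fB).
apply/eqmx_rank/eqmxP.
rewrite /derived.
apply: eqmx_trans (sumsmxMr_gen _ _ _) _.
apply: eqmx_sums => i _.
apply: eqmx_trans (genmxE _) _.
apply: eqmx_trans (sumsmxMr_gen _ _ _) _.
apply: eqmx_sums => j _.
apply: eqmx_trans (genmxE _) _.
apply: eqmx_trans (eqmxMr _ (genmxE _)) _.
apply: eqmx_sym; apply: eqmx_trans (genmxE _) _.
rewrite /transport !row1 -!rowE mulmxKpV //.
have sB : (Bp <= V)%MS by case/andP: eBV.
apply: submx_trans (cl _ _ (submx_trans (row_sub _ _) sB) (submx_trans (row_sub _ _) sB)) _.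
by case/andP: eBV.
Qed.

Lemma eig_closed (E : 'M[R]_d) : product_structure br E ->
  forall u v, (u <= eigenspace E 1)%MS -> (v <= eigenspace E 1)%MS ->
  (br u v <= eigenspace E 1)%MS.
Proof.
case=> _ _ _ I u v /eigenspaceP hu /eigenspaceP hv; apply/eigenspaceP.
rewrite !scale1r in hu hv *.
have h := I u v; rewrite hu hv in h.
set t := br u v *m E in h *; set w := br u v in h *.
have h2 : (2%:R : R) *: t = 2%:R *: w.
  by rewrite !scaler_nat !mulr2n {1}h subrK.
have := congr1 (fun x => (2%:R : R)^-1 *: x) h2.
by rewrite /= !scalerA mulVf ?scale1r // pnatr_eq0.
Qed.

End H.

Section G.
Variable R : realType.

Lemma scal_diff n (a b : R) : a%:M - b%:M = (a - b) *: (1%:M : 'M[R]_n).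
Proof. by rewrite scalerBl !scalemx1. Qed.

Lemma rank_scal n (c : R) : c != 0 -> \rank (c *: (1%:M : 'M[R]_n)) = n.
Proof. by move=> c0; rewrite mxrank_scale_nz // mxrank1. Qed.

Lemma gen_prod_para p k1 k2 (b1 : bracket R p) (b2 : bracket R p)
  (W1 : 'M[R]_(p, k1)) (W2 : 'M[R]_(p, k2)) r :
  (forall u v, b2 (- u) v = - b2 u v) -> (forall u v, b2 u (- v) = - b2 u v) ->
  (0 < p)%N -> (k1 * k2 = r + r)%N ->
  exists E', paracomplex (gen_prod b1 b2 W1 W2) E'.
Proof.
move=> hNl hNr p0 hk.
have rk : (r <= k1 * k2)%N by rewrite hk leq_addr.
pose D : 'M[R]_(k1 * k2) := copid_mx r - pid_mx r.
pose E' : 'M[R]_(p + p + k1 * k2) :=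
  block_mx (block_mx 1%:M 0 0 (-1)%:M) 0 0 D.
have mulE : forall x : 'rV[R]_(p + p + k1 * k2), x *m E' =
   row_mx (row_mx (lsubmx (lsubmx x)) (- rsubmx (lsubmx x))) (rsubmx x *m D).
  move=> x; rewrite -{1}(hsubmxK x) mul_row_block !mulmx0 addr0 add0r.
  rewrite -{1}(hsubmxK (lsubmx x)) mul_row_block !mulmx0 addr0 add0r mulmx1.
  by rewrite mul_mx_scalar scaleN1r.
have Eb : forall a : R, E' - a%:M =
   block_mx (block_mx ((1 - a) *: 1%:M) 0 0 ((-1 - a) *: 1%:M)) 0 0 (D - a%:M).
  move=> a; rewrite (scalar_mx_block (p + p) (k1 * k2) a) (scalar_mx_block p p a).
  by rewrite opp_block_mx add_block_mx !oppr0 !addr0 opp_block_mx add_block_mx !oppr0 !addr0 !scal_diff.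
have two0 : (1 + 1 : R) != 0 by rewrite (_ : 1 + 1 = 2%:R) // pnatr_eq0.
have D1 : D - 1%:M = (- (1 + 1)) *: pid_mx r.
  by apply/matrixP => i j; rewrite /D /copid_mx !mxE; ring.
have D2 : D - (-1)%:M = (1 + 1) *: copid_mx r.
  by apply/matrixP => i j; rewrite /D /copid_mx !mxE; ring.
have rk1 : \rank (E' - 1%:M) = (p + r)%N.
  rewrite Eb !rank_diag_block_mx subrr scale0r mxrank0 add0n rank_scal; last first.
    by rewrite -opprD oppr_eq0.
  by rewrite D1 mxrank_scale_nz ?oppr_eq0 // rank_pid_mx.
have rk2 : \rank (E' - (-1)%:M) = (p + r)%N.
  rewrite Eb !rank_diag_block_mx subrr scale0r mxrank0 addn0 opprK rank_scal //.
  by rewrite D2 mxrank_scale_nz // rank_copid_mx // hk addnK.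
exists E'; split; first split.
- rewrite /E' mulmx_block !mulmx0 !mul0mx !addr0 !add0r mulmx_block !mulmx0 !mul0mx !addr0 !add0r mulmx1.
  rewrite -scalar_mxM mulrNN mulr1.
  have -> : D *m D = 1%:M.
    rewrite /D mulmxBl !mulmxBr !mulmx1 pid_mx_id // mul_copid_mx_pid // !subr0 subrr sub0r opprK.
    by rewrite /copid_mx subrK.
  by rewrite -!scalar_mx_block.
- move=> h; move: rk1; rewrite h subrr mxrank0; move=> e; move: p0; lia.
- move=> h; move: rk2; rewrite h (_ : (-1)%:M = - 1%:M :> 'M[R]_(p+p+k1*k2)); last by rewrite -scaleN1r scalemx1.
  by rewrite subrr mxrank0 => e; move: p0; lia.
- move=> x y; rewrite !mulE /gen_prod /= !row_mxKl !row_mxKr.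
  rewrite !hNl !hNr !opprK !mulNmx !mulmxN !opprK.
  rewrite opp_row_mx !add_row_mx opp_row_mx !add_row_mx addrK addrK.
  congr row_mx.
  move: ((lsubmx (lsubmx x) *m W1)^T *m _) ((lsubmx (lsubmx y) *m W1)^T *m _) => u v.
  rewrite !raddfD !raddfN /=.
  set U := mxvec u; set V := mxvec v.
  have e : - U + V = - (U - V) by rewrite opprB addrC.
  by rewrite e !mulNmx !opprK -opprD subrr add0r.
by rewrite /eigenspace !mxrank_ker rk1 rk2.
Qed.
End G.

Unset Implicit Arguments.
Theorem corollary2 (R : realType) (n m : nat) (br : bracket R (2 * n))
  (X : 'M[R]_(2 * n)) (E : 'M[R]_(2 * n)) :
  is_lie br -> solvable_lie br ->
  X \in unitmx ->
  lie_b1 br = (4 * m)%N ->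
  paracomplex br E ->
  (forall i : 'I_(2 * n), (i < 4 * m)%N ->
     ~~ (row i X <= derived br (1%:M : 'M[R]_(2 * n)))%MS) ->
  (forall i : 'I_(2 * n), (i < 2 * m)%N -> (row i X <= eigenspace E 1)%MS) ->
  (forall i : 'I_(2 * n), (2 * m <= i < 4 * m)%N ->
     (row i X <= eigenspace E (-1))%MS) ->
  sub_b1 br (eigenspace E 1) = (2 * m)%N ->
  sub_b1 br (eigenspace E (-1)) = (2 * m)%N ->
  forall (p q : nat) (Bp : 'M[R]_(p, 2 * n)) (Bm : 'M[R]_(q, 2 * n)),
  row_free Bp -> (Bp == eigenspace E 1)%MS ->
  row_free Bm -> (Bm == eigenspace E (-1))%MS ->
  forall (k1 k2 : nat) (W1 : 'M[R]_(p, k1)) (W2 : 'M[R]_(q, k2)),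
  gen_forms (transport br Bp) W1 -> gen_forms (transport br Bm) W2 ->
  exists E' : 'M[R]_(p + q + k1 * k2),
    paracomplex (gen_prod (transport br Bp) (transport br Bm) W1 W2) E'.
Proof.
move=> L _ _ _ [PS Erk] _ _ _ hb1p _ p q Bp Bm fBp eBp fBm eBm k1 k2 W1 W2 g1 _.
have cl := eig_closed PS.
case: g1 => hk1 _ _.
rewrite (b1_transport L cl fBp eBp) hb1p in hk1.
have epq : p = q.
  by rewrite -(eqP fBp) -(eqP fBm) (eqmx_rank eBp) (eqmx_rank eBm).
subst q.
have p0 : (0 < p)%N.
  rewrite lt0n; apply/negP => /eqP p0.
  case: PS => EE En1 Enm1 _.
  have : \rank (eigenspace E 1) = 0%N by rewrite -(eqmx_rank eBp) (eqP fBp).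
  rewrite /eigenspace mxrank_ker => /eqP; rewrite subn_eq0 => hr.
  have hu : (E - 1%:M) \in unitmx.
    by rewrite -row_free_unit /row_free eqn_leq rank_leq_row hr.
  apply: Enm1.
  have h0 : (E - 1%:M) *m (E + 1%:M) = 0.
    by rewrite mulmxBl !mulmxDr EE mulmx1 mul1mx mulmx1 [1%:M + E]addrC subrr.
  have : E + 1%:M = 0.
    by rewrite -(mulKmx hu (E + 1%:M)) h0 mulmx0.
  by move/eqP; rewrite addr_eq0 => /eqP.
apply: (@gen_prod_para R p k1 k2 _ _ W1 W2 (m * k2)).
- by move=> u v; rewrite /transport mulNmx brNl // mulNmx.
- by move=> u v; rewrite /transport mulNmx brNr // mulNmx.
- exact: p0.
- rewrite hk1; nia.
Qed.
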